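(* Let $(\mathcal{A},\mathbf{m})$ be a multiarrangement in $\mathbb{Q}^l$ with $\mathcal{A}=\{H_1,\dots,H_n\}$, $H_i=\alpha_i^{-1}(0)$, where the $\alpha_i\in S_\mathbb{Z}=\mathbb{Z}[x_1,\dots,x_l]$ are linear forms such that no prime number divides any $\alpha_i$. Let $p$ be a good prime for $(\mathcal{A},\mathbf{m})$ and assume that the map $\pi_p^l\colon\operatorname{Ker}(\varphi_\mathbb{Z})\to D(\mathcal{A}_p,\mathbf{m})$ is surjective. If $(\mathcal{A}_p,\mathbf{m})$ is free in $\mathbb{F}_p^l$ with exponents $(e_1,\dots,e_l)$, then $(\mathcal{A},\mathbf{m})$ is free in $\mathbb{Q}^l$ with exponents $(e_1,\dots,e_l)$.
   Context: For a field $\mathbb{K}$ and $R=\mathbb{K}[x_1,\dots,x_l]$, a multiarrangement $(\mathcal{B},\mathbf{m})$ in $\mathbb{K}^l$ consists of distinct linear hyperplanes $\beta_i^{-1}(0)$ with multiplicities $\mathbf{m}\ge0$; $D(\mathcal{B},\mathbf{m})=\{\delta=\sum_j f_j\partial_{x_j}: f_j\in R,\ \delta(\beta_i)\in\beta_i^{\mathbf{m}_i}R\ \forall i\}$, identified with a submodule of $R^l$ via $\delta\mapsto(f_1,\dots,f_l)^t$. It is free with exponents $(e_1,\dots,e_l)$ if $D(\mathcal{B},\mathbf{m})$ is a free $R$-module with a basis of homogeneous derivations of polynomial degrees $e_1,\dots,e_l$. Let $S_p=\mathbb{F}_p[x_1,\dots,x_l]$, $\pi_p\colon S_\mathbb{Z}\to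 S_p$ reduction mod $p$, and $\pi_p^k\colon S_\mathbb{Z}^k\to S_p^k$ its componentwise extension. A prime $p$ is good if $\pi_p(\alpha_i)\ne\pi_p(\alpha_j)$ for all $i\ne j$; then $(\mathcal{A}_p,\mathbf{m})$ is the multiarrangement in $\mathbb{F}_p^l$ with hyperplanes $\pi_p(\alpha_i)^{-1}(0)$ of multiplicity $\mathbf{m}(H_i)$. Let $M(\mathcal{A},\mathbf{m})\subseteq S_\mathbb{Z}^n$ be generated by $\alpha_i^{\mathbf{m}(H_i)}e_i$, $A(\mathcal{A})=(\partial\alpha_i/\partial x_j)_{i,j}$, and $\varphi_\mathbb{Z}\colon S_\mathbb{Z}^l\to S_\mathbb{Z}^n/M(\mathcal{A},\mathbf{m})$, $g\mapsto A(\mathcal{A})g$. For good $p$, $\pi_p^l$ maps $\operatorname{Ker}(\varphi_\mathbb{Z})$ into $D(\mathcal{A}_p,\mathbf{m})\subseteq S_p^l$. *)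

(* Defs.v *)
From HB Require Import structures.
From mathcomp Require Import all_boot all_order all_algebra.
From mathcomp Require Import mpoly.
Set Implicit Arguments. Unset Strict Implicit. Unset Printing Implicit Defensive.
Import Order.TTheory GRing.Theory Num.Theory.
Local Open Scope ring_scope.

(* Derivations of R[x_1..x_l] are identified with column vectors in R^l:
   delta = sum_j f_j d/dx_j  <->  (f_1,...,f_l)^t. *)

Definition deriv_app (R : comNzRingType) (l : nat)
  (delta : 'cV[{mpoly R[l]}]_l) (beta : {mpoly R[l]}) : {mpoly R[l]} :=
  \sum_(j < l) delta j 0 * mderiv j beta.

Definition in_D (R : comNzRingType) (l n : nat)
  (beta : 'I_n -> {mpoly R[l]}) (m : 'I_n -> nat)
  (delta : 'cV[{mpoly R[l]}]_l) : Prop :=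
  forall i : 'I_n, exists h : {mpoly R[l]},
    deriv_app delta (beta i) = beta i ^+ m i * h.

Definition free_with_exponents (R : comNzRingType) (l n : nat)
  (beta : 'I_n -> {mpoly R[l]}) (m : 'I_n -> nat) (e : 'I_l -> nat) : Prop :=
  exists theta : 'I_l -> 'cV[{mpoly R[l]}]_l,
    [/\ (forall k, in_D beta m (theta k)),
        (forall k (j : 'I_l), theta k j 0 \is (e k).-homog),
        (forall delta, in_D beta m delta ->
           exists g : 'I_l -> {mpoly R[l]}, delta = \sum_(k < l) g k *: theta k)
      & (forall g : 'I_l -> {mpoly R[l]},
           \sum_(k < l) g k *: theta k = 0 -> forall k, g k = 0)].

Definition coef_matrix (l n : nat) (alpha : 'I_n -> {mpoly int[l]})
  : 'M[{mpoly int[l]}]_(n, l) :=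
  \matrix_(i < n, j < l) mderiv j (alpha i).

(* g in Ker(phi_Z) : A(A) g lies in M(A,m) = (+)_i alpha_i^{m_i} S_Z e_i *)
Definition in_ker_phiZ (l n : nat) (alpha : 'I_n -> {mpoly int[l]})
  (m : 'I_n -> nat) (g : 'cV[{mpoly int[l]}]_l) : Prop :=
  forall i : 'I_n, exists h : {mpoly int[l]},
    (coef_matrix alpha *m g) i 0 = alpha i ^+ m i * h.

Definition pi_p (p l : nat) (q : {mpoly int[l]}) : {mpoly 'F_p[l]} :=
  map_mpoly (fun z : int => (z%:~R : 'F_p)) q.

Definition toQ (l : nat) (q : {mpoly int[l]}) : {mpoly rat[l]} :=
  map_mpoly (fun z : int => (z%:~R : rat)) q.

Definition prime_divides (l : nat) (q : nat) (alpha : {mpoly int[l]}) : Prop :=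
  prime q /\ forall mon : 'X_{1..l}, (q%:Z %| alpha@_mon)%Z.

(* Main.v *)
Require Import Defs.
From HB Require Import structures.
From mathcomp Require Import all_boot all_order all_algebra.
From mathcomp Require Import mpoly.
From mathcomp Require Import zify.
Import Order.TTheory GRing.Theory Num.Theory.
Local Open Scope ring_scope.
Set Implicit Arguments. Unset Strict Implicit. Unset Printing Implicit Defensive.

Section Cmap.
Variables (l : nat) (R S : nzRingType).
Definition cmap (f : R -> S) (q : {mpoly R[l]}) : {mpoly S[l]} :=
  \sum_(m : 'X_{1..l < msize q}) f q@_m *: 'X_[m].
Lemma mcoeff_cmap f m q : f 0 = 0 -> (cmap f q)@_m = f q@_m.
Proof.
move=> f0; rewrite /cmap; case: (ltnP (mdeg m) (msize q)) => h.
  exact: (mcoeff_mpoly (fun m => f q@_m)).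
rewrite raddf_sum big1 /=.
  have -> : q@_m = 0.
    apply/memN_msupp_eq0; apply/negP => /msize_mdeg_lt; by rewrite ltnNge h.
  by rewrite f0.
move=> [m' hm'] _ /=; rewrite mcoeffZ mcoeffX.
case: eqP => [e|]; last by rewrite mulr0.
by move: hm'; rewrite e ltnNge h.
Qed.
End Cmap.

Section Homog.
Variables (l : nat) (R : comNzRingType).
Implicit Types (q a t : {mpoly R[l]}).
Local Notation ph := (pihomog mdeg).

Lemma mcoeff_pihomog d q m : (ph d q)@_m = if mdeg m == d then q@_m else 0.
Proof.
rewrite pihomogE raddf_sum /= big_mkcond /=.
under eq_bigr => m' _ do rewrite mcoeffZ mcoeffX.
case: (boolP (m \in msupp q)) => hm.
  rewrite (bigD1_seq m) ?msupp_uniq //= eqxx mulr1 big1 ?addr0.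
    by case: ifP.
  by move=> m' ne; case: ifP => _ //; rewrite (negbTE ne) mulr0.
rewrite big1; first by rewrite (memN_msupp_eq0 hm); case: ifP.
move=> m' _; case: ifP => // _.
by case: eqP => [->|_]; rewrite ?(memN_msupp_eq0 hm) ?mul0r ?mulr0.
Qed.

Lemma pihomog_homog_id d q : q \is d.-homog -> ph d q = q.
Proof. exact: pihomog_dE. Qed.

Lemma pihomog_homog_ne d d' q : q \is d'.-homog -> d' != d -> ph d q = 0.
Proof. by move=> h ne; apply: (pihomog_ne0 ne h). Qed.

Lemma pihomogM_homog d e a t : t \is e.-homog ->
  ph d (a * t) = (if (e <= d)%N then ph (d - e)%N a else 0) * t.
Proof.
move=> ht.
pose K := maxn (msize a) d.+1.
have hK : (msize a <= K)%N by rewrite leq_maxl.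
rewrite {1}(pihomog_partitionE hK) mulr_suml raddf_sum /=.
have hterm : forall j : 'I_K, ph d (ph j a * t) = if (j + e == d)%N then ph j a * t else 0.
  move=> j; have hj : ph j a * t \is (j + e)%N.-homog by apply: dhomogM => //; exact: pihomogP.
  case: eqP => [<-|ne]; first exact: pihomog_homog_id.
  by apply: (pihomog_homog_ne hj); apply/eqP.
under eq_bigr => j _ do rewrite hterm.
case: leqP => hed; last first.
  rewrite mul0r big1 // => j _; case: eqP => // e1.
  by move: hed; rewrite -e1 ltnNge leq_addl.
have hdK : (d - e < K)%N by rewrite (leq_ltn_trans (leq_subr _ _)) // leq_maxr.
rewrite (bigD1 (Ordinal hdK)) //= subnK // eqxx big1 ?addr0 //.
move=> j /eqP nej; case: eqP => // e1; case: nej; apply: val_inj => /=.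
by rewrite -e1 addnK.
Qed.

Lemma pihomogMl_homog d e a t : t \is e.-homog ->
  ph d (t * a) = t * (if (e <= d)%N then ph (d - e)%N a else 0).
Proof. by move=> ht; rewrite mulrC (pihomogM_homog _ _ ht) mulrC. Qed.

Lemma pihomog_sum d (I : Type) (r : seq I) (P : pred I) (F : I -> {mpoly R[l]}) :
  ph d (\sum_(i <- r | P i) F i) = \sum_(i <- r | P i) ph d (F i).
Proof. exact: raddf_sum. Qed.

Lemma mderiv_homog d i q : q \is d.+1.-homog -> mderiv i q \is d.-homog.
Proof.
move=> /dhomogP hq; apply/dhomogP => m; rewrite mcoeff_msupp mcoeff_mderiv.
move=> hnz; have : (m + U_(i))%MM \in msupp q.
  by rewrite mcoeff_msupp; apply: contraNneq hnz => ->; rewrite mul0rn.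
move/hq => h; apply: succn_inj; rewrite -h -addn1 -(mdeg1 i); symmetry; exact: mdegD.
Qed.
End Homog.

Section MapHomog.
Variables (l : nat) (R S : comNzRingType) (f : {additive R -> S}).
Lemma map_pihomog d (q : {mpoly R[l]}) :
  map_mpoly f (pihomog mdeg d q) = pihomog mdeg d (map_mpoly f q).
Proof.
apply/mpolyP => m; rewrite mcoeff_map_mpoly !mcoeff_pihomog mcoeff_map_mpoly.
by case: ifP => _ //; rewrite raddf0.
Qed.
Lemma map_homog d (q : {mpoly R[l]}) : q \is d.-homog -> map_mpoly f q \is d.-homog.
Proof. by rewrite !homog_piE -map_pihomog => /eqP ->. Qed.
End MapHomog.

Section MapDeriv.
Variables (l : nat) (R S : comNzRingType) (f : {additive R -> S}).
Lemma mderiv_map j (q : {mpoly R[l]}) :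
  mderiv j (map_mpoly f q) = map_mpoly f (mderiv j q).
Proof.
apply/mpolyP => mm.
by rewrite mcoeff_map_mpoly !mcoeff_mderiv mcoeff_map_mpoly raddfMn.
Qed.

Lemma cmap_homog (g : R -> S) (q : {mpoly R[l]}) d :
  g 0 = 0 -> q \is d.-homog -> cmap g q \is d.-homog.
Proof.
move=> g0 /dhomogP hq; apply/dhomogP => mm; rewrite mcoeff_msupp mcoeff_cmap // => h.
apply: hq; rewrite mcoeff_msupp; apply: contraNneq h => ->; by rewrite g0.
Qed.
End MapDeriv.

Section Red.
Variable l : nat.
Local Notation SZ := {mpoly int[l]}.

Lemma coef_mulE n (alpha : 'I_n -> SZ) g i :
  (coef_matrix alpha *m g) i 0 = deriv_app g (alpha i).
Proof. rewrite mxE /deriv_app; apply: eq_bigr => j _; by rewrite mxE mulrC. Qed.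

Lemma ker_in_D (S : comNzRingType) n (alpha : 'I_n -> SZ) mu g :
  in_ker_phiZ alpha mu g ->
  in_D (fun i => map_mpoly (fun z : int => z%:~R : S) (alpha i)) mu
       (map_mx (map_mpoly (fun z : int => z%:~R : S)) g).
Proof.
move=> hg i; case: (hg i) => h hh; exists (map_mpoly (fun z : int => z%:~R : S) h).
rewrite -rmorphXn -rmorphM -hh coef_mulE /deriv_app rmorph_sum; apply: eq_bigr => j _.
by rewrite mxE rmorphM mderiv_map.
Qed.

Definition liftp p (a : {mpoly 'F_p[l]}) : SZ :=
  cmap (fun x : 'F_p => (nat_of_ord x)%:Z) a.

Lemma liftpK p a : pi_p p (liftp a) = a.
Proof.
apply/mpolyP => mm; rewrite /pi_p mcoeff_map_mpoly mcoeff_cmap //.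
exact: (natr_Zp (a@_mm)).
Qed.

Lemma liftp_homog p a d : a \is d.-homog -> @liftp p a \is d.-homog.
Proof. exact: cmap_homog. Qed.

Lemma Fp_intr_eq0 p z : prime p -> ((z%:~R : 'F_p) == 0) = (p%:Z %| z)%Z.
Proof.
move=> pp; rewrite dvdzE /=.
have -> : ((z%:~R : 'F_p) == 0) = ((`|z|%N%:R : 'F_p) == 0).
  by case: z => n; rewrite ?NegzE ?mulrNz ?oppr_eq0 -pmulrn.
by rewrite -(inj_eq val_inj) /= val_Fp_nat.
Qed.

Definition PZ p : SZ := p%:R.

Lemma PZ_ne0 p : prime p -> PZ p != 0.
Proof.
move=> pp; apply/eqP => /(congr1 (mcoeff 0%MM)).
rewrite /PZ -(rmorph_nat (mpolyC l (R:=int))) mcoeffC eqxx mulr1 mcoeff0 => /eqP.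
by rewrite pnatr_eq0 => /eqP p0; move: pp; rewrite p0.
Qed.

Lemma pi_PZ p : prime p -> pi_p p (PZ p) = 0.
Proof. by move=> pp; rewrite /PZ /pi_p rmorph_nat -(rmorph_nat (mpolyC l (R:='F_p))) pchar_Fp_0 // raddf0. Qed.

Definition divpz p (q : SZ) : SZ := cmap (fun z : int => (z %/ p%:Z)%Z) q.

Lemma divpzK p q : prime p -> pi_p p q = 0 -> q = PZ p * divpz p q.
Proof.
move=> pp h; apply/mpolyP => mm.
rewrite /PZ -(rmorph_nat (mpolyC l (R:=int))) mcoeffCM mcoeff_cmap ?div0z //.
have : ((q@_mm)%:~R : 'F_p) == 0 by rewrite -[X in X == _](mcoeff_map_mpoly (intr : {additive int -> 'F_p})) -/(pi_p p q) h mcoeff0.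
rewrite Fp_intr_eq0 // => /divzK e.
by rewrite -{1}e mulrC natz.
Qed.

Lemma pi_ne0 p (a : SZ) : prime p -> ~ prime_divides p a -> pi_p p a != 0.
Proof.
move=> pp nd; apply/eqP => h; apply: nd; split => // mm.
rewrite -Fp_intr_eq0 //.
by rewrite -(mcoeff_map_mpoly (intr : {additive int -> 'F_p})) -/(pi_p p a) h mcoeff0.
Qed.

Lemma pi_mul p (a b : SZ) : pi_p p (a * b) = pi_p p a * pi_p p b.
Proof. exact: (rmorphM (@pi_p p l)). Qed.
Lemma pi_exp p (a : SZ) k : pi_p p (a ^+ k) = pi_p p a ^+ k.
Proof. exact: (rmorphXn (@pi_p p l)). Qed.

Lemma gauss_p p (a y h : SZ) k : prime p -> pi_p p a != 0 ->
  PZ p * y = a ^+ k * h -> exists h', y = a ^+ k * h'.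
Proof.
move=> pp na e.
have hp : pi_p p h = 0.
  have : pi_p p (a ^+ k * h) = 0 by rewrite -e pi_mul pi_PZ // mul0r.
  rewrite pi_mul pi_exp => /eqP; rewrite mulf_eq0 expf_eq0 (negbTE na) andbF /=.
  by move/eqP.
exists (divpz p h); apply: (mulfI (PZ_ne0 pp)).
by rewrite e {1}(divpzK pp hp) mulrCA.
Qed.

Lemma pi_ph p d (q : SZ) : pi_p p (pihomog mdeg d q) = pihomog mdeg d (pi_p p q).
Proof. exact: map_pihomog. Qed.
Lemma toQ_ph d (q : SZ) : toQ (pihomog mdeg d q) = pihomog mdeg d (toQ q).
Proof. exact: map_pihomog. Qed.
Lemma toQ_homog d (q : SZ) : q \is d.-homog -> toQ q \is d.-homog.
Proof. exact: map_homog. Qed.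
Lemma toQ_mul (a b : SZ) : toQ (a * b) = toQ a * toQ b.
Proof. exact: (rmorphM (@toQ l)). Qed.
Lemma toQ_exp (a : SZ) k : toQ (a ^+ k) = toQ a ^+ k.
Proof. exact: (rmorphXn (@toQ l)). Qed.
Lemma toQ_inj : injective (@toQ l).
Proof.
move=> a b h; apply/mpolyP => mm; have := congr1 (mcoeff mm) h.
rewrite /toQ !mcoeff_map_mpoly; exact: intr_inj.
Qed.
Lemma pi_mx_comb p k (C : 'I_k -> SZ) (G : 'I_k -> 'cV[SZ]_l) :
  map_mx (@pi_p p l) (\sum_i C i *: G i) = \sum_i pi_p p (C i) *: map_mx (@pi_p p l) (G i).
Proof.
apply/matrixP => a b; rewrite !mxE !summxE /pi_p raddf_sum; apply: eq_bigr => i _.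
rewrite !mxE; exact: (rmorphM (@pi_p p l)).
Qed.
Lemma toQ_mx_comb k (C : 'I_k -> SZ) (G : 'I_k -> 'cV[SZ]_l) :
  map_mx (@toQ l) (\sum_i C i *: G i) = \sum_i toQ (C i) *: map_mx (@toQ l) (G i).
Proof.
apply/matrixP => a b; rewrite !mxE !summxE /toQ raddf_sum; apply: eq_bigr => i _.
rewrite !mxE; exact: (rmorphM (@toQ l)).
Qed.
End Red.

Section Main.
Variables (l n : nat) (alpha : 'I_n -> {mpoly int[l]}) (mu : 'I_n -> nat) (p : nat) (e : 'I_l -> nat).
Local Notation SZ := {mpoly int[l]}.
Local Notation ph := (pihomog mdeg).
Hypothesis Hlin : forall i, alpha i \is 1.-homog.
Hypothesis Hnd : forall i, pi_p p (alpha i) != 0.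
Hypothesis pp : prime p.
Local Notation ker := (in_ker_phiZ alpha mu).
Local Notation P := (PZ l p).

Lemma ker0 : ker 0.
Proof. move=> i; exists 0; by rewrite mulmx0 mxE mulr0. Qed.
Lemma kerD g1 g2 : ker g1 -> ker g2 -> ker (g1 + g2).
Proof.
move=> h1 h2 i; case: (h1 i) => a ha; case: (h2 i) => b hb.
by exists (a + b); rewrite mulmxDr mxE ha hb mulrDr.
Qed.
Lemma kerN g : ker g -> ker (- g).
Proof. move=> h i; case: (h i) => a ha; exists (- a); by rewrite mulmxN mxE ha mulrN. Qed.
Lemma kerB g1 g2 : ker g1 -> ker g2 -> ker (g1 - g2).
Proof. by move=> h1 h2; apply: kerD => //; apply: kerN. Qed.
Lemma kerZ c g : ker g -> ker (c *: g).
Proof. move=> h i; case: (h i) => a ha; exists (c * a); by rewrite -scalemxAr mxE ha mulrCA. Qed.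
Lemma ker_sum (I : Type) (r : seq I) (Pr : pred I) (F : I -> 'cV[SZ]_l) :
  (forall i, Pr i -> ker (F i)) -> ker (\sum_(i <- r | Pr i) F i).
Proof. move=> h; elim/big_ind: _ => //; [exact: ker0 | exact: kerD]. Qed.
Lemma ker_div g : ker (P *: g) -> ker g.
Proof.
move=> h i; case: (h i) => a ha; apply: (gauss_p pp (Hnd i) (h:=a)).
by rewrite -ha -scalemxAr [RHS]mxE.
Qed.

Lemma coef_homog (i : 'I_n) (j : 'I_l) : mderiv j (alpha i) \is 0.-homog.
Proof. apply: mderiv_homog; exact: Hlin. Qed.

Lemma ker_ph d g : ker g -> ker (map_mx (ph d) g).
Proof.
move=> h i; case: (h i) => a ha.
exists (if (mu i <= d)%N then ph (d - mu i) a else 0).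
have hom : alpha i ^+ mu i \is (mu i).-homog.
  by have := dhomogMn (mu i) (Hlin i); rewrite mul1n.
rewrite -(pihomogMl_homog _ _ hom) -ha !coef_mulE /deriv_app pihomog_sum.
apply: eq_bigr => j _.
by rewrite mxE (pihomogM_homog _ _ (coef_homog i j)) leq0n subn0.
Qed.

Lemma scalemx_P_eq0 (M : 'cV[SZ]_l) : P *: M = 0 -> M = 0.
Proof.
move=> h; apply/matrixP => a b; have := congr1 (fun M : 'cV[SZ]_l => M a b) h => /=.
rewrite !mxE => /eqP; rewrite mulf_eq0 (negbTE (PZ_ne0 _ pp)) /=; by move/eqP.
Qed.

Lemma mcoeff_P q mm : (P * q)@_mm = p%:R * q@_mm.
Proof. by rewrite /PZ -(rmorph_nat (mpolyC l (R:=int))) mcoeffCM. Qed.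

Variable theta : 'I_l -> 'cV[{mpoly 'F_p[l]}]_l.
Hypothesis Hth_hom : forall k j, theta k j 0 \is (e k).-homog.
Hypothesis Hth_ind : forall g : 'I_l -> {mpoly 'F_p[l]},
  \sum_(k < l) g k *: theta k = 0 -> forall k, g k = 0.

Lemma lifts :
  (forall k, exists g, ker g /\ map_mx (@pi_p p l) g = theta k) ->
  exists G : 'I_l -> 'cV[SZ]_l, forall k,
    [/\ ker (G k), map_mx (@pi_p p l) (G k) = theta k & forall j, G k j 0 \is (e k).-homog].
Proof.
case/fin_all_exists => g hg.
exists (fun k => map_mx (ph (e k)) (g k)) => k; case: (hg k) => hk hpk; split.
- exact: ker_ph.
- apply/matrixP => i j; rewrite !mxE pi_ph.
  have := congr1 (fun M : 'cV[{mpoly 'F_p[l]}]_l => M i j) hpk; rewrite /= mxE => ->.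
  by rewrite (ord1 j) pihomog_homog_id.
- by move=> j; rewrite mxE; apply: pihomogP.
Qed.

Lemma pi_mx0 : map_mx (@pi_p p l) (0 : 'cV[SZ]_l) = 0.
Proof. by apply/matrixP => a b; rewrite !mxE; exact: (raddf0 (@pi_p p l)). Qed.

Section Indep.
Variable G : 'I_l -> 'cV[SZ]_l.
Hypothesis HG : forall k, map_mx (@pi_p p l) (G k) = theta k.

Lemma indepZ (C : 'I_l -> SZ) : \sum_k C k *: G k = 0 -> forall k, C k = 0.
Proof.
suff H : forall N (C : 'I_l -> SZ), \sum_k C k *: G k = 0 ->
    forall k mm, (`|(C k)@_mm| <= N)%N -> (C k)@_mm = 0.
  move=> hC k; apply/mpolyP => mm; rewrite mcoeff0; exact: (H _ C hC k mm (leqnn _)).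
elim=> [|N IH] {}C hC k mm hN.
  by apply/eqP; rewrite -absz_eq0 -leqn0.
have hpi : forall k, pi_p p (C k) = 0.
  apply: Hth_ind; have h1 := congr1 (map_mx (@pi_p p l)) hC.
  rewrite pi_mx_comb pi_mx0 in h1; apply: etrans h1; apply: eq_bigr => k' _; by rewrite HG.
pose C' := fun k => divpz p (C k).
have hCk : forall k, C k = P * C' k := fun k => divpzK pp (hpi k).
have hC' : \sum_k C' k *: G k = 0.
  apply: scalemx_P_eq0; rewrite scaler_sumr; apply: etrans hC; apply: eq_bigr => k' _.
  by rewrite scalerA -hCk.
have ec : (C k)@_mm = p%:R * (C' k)@_mm by rewrite hCk mcoeff_P.
have : (`|(C' k)@_mm| <= N)%N.
  move: hN; rewrite ec abszM natz absz_nat.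
  have := prime_gt1 pp; case: (eqVneq `|(C' k)@_mm|%N 0%N) => [-> //|nz] *; nia.
by move/(IH C' hC' k mm) => h0; rewrite ec h0 mulr0.
Qed.
End Indep.

End Main.

Lemma msize_homog (l : nat) (R : nzRingType) (q : {mpoly R[l]}) d :
  q \is d.-homog -> (msize q <= d.+1)%N.
Proof.
move=> /dhomogP hq; rewrite /mmeasure; apply/bigmax_leqP_seq => m hm _.
by rewrite hq.
Qed.

Lemma denom_fam (I : finType) (x : I -> rat) :
  exists2 D : int, 0 < D & forall i, D%:~R * x i \is a Num.int.
Proof.
exists (\prod_i denq (x i)); first by apply: prodr_gt0 => i _; exact: denq_gt0.
move=> i; rewrite (bigD1 i) //= intrM mulrC mulrA -numqE.
by apply: rpredM; apply: intr_int.
Qed.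

Lemma toQ_cmap_floor (l : nat) (q : {mpoly rat[l]}) :
  (forall mm, q@_mm \is a Num.int) -> toQ (cmap (@Num.floor _) q) = q.
Proof.
move=> h; apply/mpolyP => mm; rewrite /toQ mcoeff_map_mpoly mcoeff_cmap ?floor0 //.
exact: floorK.
Qed.

Lemma mpolyC_int (l : nat) (D : int) : (D%:~R : {mpoly rat[l]}) = (D%:~R)%:MP.
Proof. by rewrite rmorph_int. Qed.

Lemma denom_mfam (l : nat) (I : finType) (F : I -> {mpoly rat[l]}) :
  exists2 D : int, 0 < D & forall i, exists Q : {mpoly int[l]}, toQ Q = D%:~R * F i.
Proof.
pose B := (\max_i msize (F i))%N.
have [D D0 hD] := denom_fam (fun x : I * 'X_{1..l < B} => (F x.1)@_(bmnm x.2)).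
exists D => // i; exists (cmap (@Num.floor _) (D%:~R * F i)).
apply: toQ_cmap_floor => mm; rewrite mpolyC_int mcoeffCM.
case: (ltnP (mdeg mm) B) => hm; first exact: (hD (i, BMultinom hm)).
have -> : (F i)@_mm = 0.
  apply: memN_msupp_eq0; apply: msize_mdeg_ge; apply: leq_trans hm.
  exact: (leq_bigmax i).
by rewrite mulr0 rpred0.
Qed.

Lemma deriv_app_map (l : nat) (R S : comNzRingType) (f : {rmorphism R -> S})
  (g : 'cV[{mpoly R[l]}]_l) (b : {mpoly R[l]}) :
  map_mpoly f (deriv_app g b) = deriv_app (map_mx (map_mpoly f) g) (map_mpoly f b).
Proof.
rewrite /deriv_app rmorph_sum; apply: eq_bigr => j _.
by rewrite mxE rmorphM mderiv_map.
Qed.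

Lemma toQ_deriv_app (l : nat) (g : 'cV[{mpoly int[l]}]_l) b :
  toQ (deriv_app g b) = deriv_app (map_mx (@toQ l) g) (toQ b).
Proof. exact: (deriv_app_map (intr : {rmorphism int -> rat})). Qed.

Lemma deriv_appZ (l : nat) (R : comNzRingType) (c : {mpoly R[l]}) (g : 'cV[{mpoly R[l]}]_l) b :
  deriv_app (c *: g) b = c * deriv_app g b.
Proof.
rewrite /deriv_app mulr_sumr; apply: eq_bigr => j _; by rewrite mxE mulrA.
Qed.

Section Coord.
Variables (l d : nat).
Local Notation SQ := {mpoly rat[l]}.
Local Notation Mon := ('X_{1..l < d.+1}).
Local Notation JT := ('I_l * Mon)%type.
Local Notation N := #|{: JT}|.

Definition mcoord (v : 'cV[SQ]_l) : 'rV[rat]_N :=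
  \row_i (if mdeg (bmnm (enum_val i).2) == d
          then (v (enum_val i).1 0)@_(bmnm (enum_val i).2) else 0).

Lemma mcoordD v w : mcoord (v + w) = mcoord v + mcoord w.
Proof. apply/rowP => i; rewrite !mxE; case: ifP => _; by rewrite ?mcoeffD ?addr0. Qed.
Lemma mcoord0 : mcoord 0 = 0.
Proof. apply/rowP => i; rewrite !mxE; case: ifP => _; by rewrite ?mcoeff0. Qed.
Lemma mcoordN v : mcoord (- v) = - mcoord v.
Proof. apply/rowP => i; rewrite !mxE; case: ifP => _; by rewrite ?mcoeffN ?oppr0. Qed.
Lemma mcoord_sum (I : Type) (r : seq I) (P : pred I) (F : I -> 'cV[SQ]_l) :
  mcoord (\sum_(i <- r | P i) F i) = \sum_(i <- r | P i) mcoord (F i).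
Proof. exact: (big_morph mcoord mcoordD mcoord0). Qed.
Lemma mcoordZc (c : rat) v : mcoord (c%:MP *: v) = c *: mcoord v.
Proof. apply/rowP => i; rewrite !mxE; case: ifP => _; by rewrite ?mcoeffCM ?mulr0. Qed.
Lemma mcoord_ph v : mcoord (map_mx (pihomog mdeg d) v) = mcoord v.
Proof.
apply/rowP => i; rewrite !mxE; case: ifP => h //.
by rewrite mcoeff_pihomog h.
Qed.

Lemma mcoord_inj (v w : 'cV[SQ]_l) : (forall j, v j 0 \is d.-homog) -> (forall j, w j 0 \is d.-homog) ->
  mcoord v = mcoord w -> v = w.
Proof.
move=> hv hw h; apply/matrixP => j b; rewrite (ord1 b); apply/mpolyP => mm.
case: (eqVneq (mdeg mm) d) => hm; last first.
  by rewrite (dhomog_nemf_coeff (hv j) hm) (dhomog_nemf_coeff (hw j) hm).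
have hlt : (mdeg mm < d.+1)%N by rewrite hm.
have := congr1 (fun r : 'rV[rat]_N => r 0 (enum_rank (j, BMultinom hlt))) h.
by rewrite /= !mxE enum_rankK /= hm eqxx.
Qed.

Lemma mcoord_int (g : 'cV[{mpoly int[l]}]_l) i : mcoord (map_mx (@toQ l) g) 0 i \is a Num.int.
Proof.
rewrite !mxE; case: ifP => _; last exact: rpred0.
by rewrite /toQ mcoeff_map_mpoly intr_int.
Qed.
End Coord.

Section Gen.
Variables (l n : nat) (alpha : 'I_n -> {mpoly int[l]}) (mu : 'I_n -> nat) (p : nat) (e : 'I_l -> nat).
Local Notation SZ := {mpoly int[l]}.
Local Notation SQ := {mpoly rat[l]}.
Local Notation ph := (pihomog mdeg).
Hypothesis Hlin : forall i, alpha i \is 1.-homog.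
Hypothesis Hnd : forall i, pi_p p (alpha i) != 0.
Hypothesis pp : prime p.
Local Notation ker := (in_ker_phiZ alpha mu).
Local Notation P := (PZ l p).
Variable theta : 'I_l -> 'cV[{mpoly 'F_p[l]}]_l.
Hypothesis Hth_gen : forall delta, in_D (fun i => pi_p p (alpha i)) mu delta ->
  exists g : 'I_l -> {mpoly 'F_p[l]}, delta = \sum_(k < l) g k *: theta k.
Variable G : 'I_l -> 'cV[SZ]_l.
Hypothesis HGker : forall k, ker (G k).
Hypothesis HGpi : forall k, map_mx (@pi_p p l) (G k) = theta k.
Hypothesis HGhom : forall k j, G k j 0 \is (e k).-homog.

Lemma pi_mxB (M1 M2 : 'cV[SZ]_l) :
  map_mx (@pi_p p l) (M1 - M2) = map_mx (@pi_p p l) M1 - map_mx (@pi_p p l) M2.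
Proof. by apply/matrixP => a b; rewrite !mxE; exact: (raddfB (@pi_p p l)). Qed.

Lemma padic g : ker g -> forall R, exists C : 'I_l -> SZ, exists gR,
  ker gR /\ g = \sum_k C k *: G k + (P ^+ R) *: gR.
Proof.
move=> hg; elim=> [|R [C [gR [hR eR]]]].
  exists (fun _ => 0), g; split => //.
  by rewrite big1 ?add0r ?expr0 ?scale1r // => k _; rewrite scale0r.
have hD : in_D (fun i => pi_p p (alpha i)) mu (map_mx (@pi_p p l) gR) := ker_in_D _ hR.
case: (Hth_gen hD) => a ha.
pose A k := liftp (a k).
pose X := gR - \sum_k A k *: G k.
have hX : ker X by apply: kerB => //; apply: ker_sum => k _; apply: kerZ.
have hpX : map_mx (@pi_p p l) X = 0.
  rewrite pi_mxB pi_mx_comb ha; apply/eqP; rewrite subr_eq0; apply/eqP.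
  by apply: eq_bigr => k _; rewrite HGpi liftpK.
pose g' := map_mx (divpz p) X.
have eX : X = P *: g'.
  apply/matrixP => a' b'; rewrite !mxE; apply: divpzK => //.
  by have := congr1 (fun M : 'cV[{mpoly 'F_p[l]}]_l => M a' b') hpX; rewrite /= !mxE.
exists (fun k => C k + P ^+ R * A k), g'; split.
  by apply: (ker_div Hnd pp); rewrite -eX.
rewrite eR; have -> : gR = \sum_k A k *: G k + P *: g' by rewrite -eX /X addrC subrK.
rewrite scalerDr scaler_sumr addrA; congr (_ + _); last by rewrite exprSr scalerA.
rewrite -big_split; apply: eq_bigr => k _; by rewrite scalerDl scalerA.
Qed.

Definition GQ k := map_mx (@toQ l) (G k).
Lemma GQhom k j : GQ k j 0 \is (e k).-homog.
Proof. rewrite mxE; exact: toQ_homog. Qed.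

Lemma toQ_mxD (M1 M2 : 'cV[SZ]_l) :
  map_mx (@toQ l) (M1 + M2) = map_mx (@toQ l) M1 + map_mx (@toQ l) M2.
Proof. by apply/matrixP => a b; rewrite !mxE; exact: (raddfD (@toQ l)). Qed.

Lemma toQ_mxPZ R (M : 'cV[SZ]_l) :
  map_mx (@toQ l) (P ^+ R *: M) = ((p ^ R)%:R)%:MP *: map_mx (@toQ l) M.
Proof.
apply/matrixP => a b; rewrite !mxE toQ_mul toQ_exp /PZ.
by rewrite /toQ rmorph_nat natrX rmorphXn rmorph_nat.
Qed.

Section Deg.
Variable d : nat.
Local Notation Mon := ('X_{1..l < d.+1}).
Local Notation JT := ('I_l * Mon)%type.
Local Notation N := #|{: JT}|.

Definition rowf (r : 'I_N) : 'rV[rat]_N :=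
  if (mdeg (bmnm (enum_val r).2) + e (enum_val r).1 == d)%N
  then mcoord d ('X_[bmnm (enum_val r).2] *: GQ (enum_val r).1) else 0.
Definition Umx : 'M[rat]_(N, N) := \matrix_(r < N) rowf r.

Lemma rowfE (k : 'I_l) (a : Mon) : rowf (enum_rank (k, a)) =
  if (mdeg (bmnm a) + e k == d)%N then mcoord d ('X_[bmnm a] *: GQ k) else 0.
Proof. by rewrite /rowf enum_rankK. Qed.

Lemma span_sub (c : 'I_l -> SQ) : (mcoord d (\sum_k c k *: GQ k) <= Umx)%MS.
Proof.
rewrite mcoord_sum; apply: summx_sub => k _.
pose c' := if (e k <= d)%N then ph (d - e k) (c k) else 0.
have e1 : map_mx (ph d) (c k *: GQ k) = c' *: GQ k.
  apply/matrixP => a b; rewrite !mxE (ord1 b).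
  by rewrite (pihomogM_homog _ _ (toQ_homog (HGhom k a))).
have hc' : c' \is (d - e k).-homog.
  by rewrite /c'; case: ifP => _; [exact: pihomogP | exact: dhomog0].
have hs : (msize c' <= d.+1)%N.
  by apply: (leq_trans (msize_homog hc')); rewrite ltnS leq_subr.
rewrite -mcoord_ph e1 (mpolywE hs) scaler_suml mcoord_sum; apply: summx_sub => a _.
case: (boolP (mdeg (bmnm a) + e k == d)%N) => hcond.
  rewrite -mul_mpolyC -scalerA mcoordZc; apply: scalemx_sub.
  have := row_sub (enum_rank (k, a)) Umx; by rewrite rowK rowfE hcond.
have -> : c'@_(bmnm a) = 0.
  rewrite /c'; case: ifP => hle; last by rewrite mcoeff0.
  apply: (dhomog_nemf_coeff (pihomogP _ _ _)); apply: contra hcond => /eqP h.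
  by rewrite h subnK.
by rewrite !scale0r mcoord0 sub0mx.
Qed.

Lemma span_of (v : 'cV[SQ]_l) : (forall j, v j 0 \is d.-homog) ->
  (mcoord d v <= Umx)%MS -> exists c : 'I_l -> SQ, v = \sum_k c k *: GQ k.
Proof.
move=> hv /submxP [lam hlam].
pose s k (a : Mon) : rat :=
  if (mdeg (bmnm a) + e k == d)%N then lam 0 (enum_rank (k, a)) else 0.
exists (fun k => \sum_(a : Mon) s k a *: 'X_[bmnm a]).
apply: mcoord_inj hv _ _.
  move=> j; rewrite summxE; apply: rpred_sum => k _; rewrite mxE mulr_suml.
  apply: rpred_sum => a _; rewrite /s; case: ifP => hcond; last first.
    by rewrite scale0r mul0r dhomog0.
  rewrite -scalerAl; apply: rpredZ.
  have h1 : 'X_[bmnm a] * GQ k j 0 \is (mdeg (bmnm a) + e k).-homog.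
    by apply: dhomogM; [rewrite dhomogX | exact: GQhom].
  by rewrite (eqP hcond) in h1.
rewrite hlam mulmx_sum_row mcoord_sum.
rewrite (reindex (@enum_rank JT)) /=; last exact: onW_bij (@enum_rank_bij JT).
rewrite (eq_bigr (fun x : JT => lam 0 (enum_rank (x.1, x.2)) *: row (enum_rank (x.1, x.2)) Umx)); last by move=> [].
rewrite -(pair_bigA _ (fun k a => lam 0 (enum_rank (k, a)) *: row (enum_rank (k, a)) Umx)).
symmetry; apply: eq_bigr => k _; rewrite scaler_suml mcoord_sum; apply: eq_bigr => a _.
rewrite rowK rowfE /s; case: ifP => _; last by rewrite !scale0r mcoord0 scaler0.
by rewrite -mul_mpolyC -scalerA mcoordZc.
Qed.


Lemma gen_homog g : ker g -> (forall j, g j 0 \is d.-homog) ->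
  exists c : 'I_l -> SQ, map_mx (@toQ l) g = \sum_k c k *: GQ k.
Proof.
move=> hg hhom.
have hv : forall j, (map_mx (@toQ l) g) j 0 \is d.-homog.
  by move=> j; rewrite mxE; exact: toQ_homog.
case: (boolP (mcoord d (map_mx (@toQ l) g) <= Umx)%MS) => hs; first exact: span_of.
exfalso.
move: hs; set v := mcoord d (map_mx (@toQ l) g) => hs.
pose f := cokermx Umx.
have hvf : v *m f != 0 by rewrite -submxE.
have [j0 hj0] : exists j0, (v *m f) 0 j0 != 0.
  have hex : [exists j, (v *m f) 0 j != 0].
    apply: contraT => /existsPn h.
    suff : v *m f = 0 by move/eqP; rewrite (negbTE hvf).
    apply/rowP => j; rewrite [RHS]mxE.
    by move: (h j); rewrite negbK => /eqP.
  by case/existsP: hex => j hj; exists j.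
have [Dn Dn0 hDn] := denom_fam (fun x : 'I_N * 'I_N => f x.1 x.2).
have intf : forall (w : 'cV[SZ]_l), Dn%:~R * (mcoord d (map_mx (@toQ l) w) *m f) 0 j0 \is a Num.int.
  move=> w; rewrite mxE mulr_sumr; apply: rpred_sum => i _; rewrite mulrCA.
  by apply: rpredM; [exact: mcoord_int | exact: (hDn (i, j0))].
pose z := Dn%:~R * (v *m f) 0 j0.
have z0 : z != 0 by rewrite mulf_neq0 // intr_eq0 gt_eqF.
have [zi ezi] : exists zi : int, z = zi%:~R by apply/intrP; exact: intf.
pose R := `|zi|%N.
have [C [gR [hR eR]]] := padic hg R.
have ev : v = mcoord d (\sum_k toQ (C k) *: GQ k) + (p ^ R)%:R *: mcoord d (map_mx (@toQ l) gR).
  by rewrite /v eR toQ_mxD toQ_mx_comb toQ_mxPZ mcoordD mcoordZc.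
have hzero : mcoord d (\sum_k toQ (C k) *: GQ k) *m f = 0.
  by apply/eqP; rewrite -submxE; exact: span_sub.
pose t := Dn%:~R * (mcoord d (map_mx (@toQ l) gR) *m f) 0 j0.
have ez : z = (p ^ R)%:R * t.
  by rewrite /z /t ev mulmxDl hzero add0r -scalemxAl mxE mulrCA.
have t0 : t != 0 by apply: contraNneq z0; rewrite ez => ->; rewrite mulr0.
have t1 := norm_intr_ge1 (intf gR) t0.
have hRp : (R < p ^ R)%N := ltn_expl R (prime_gt1 pp).
have e1 : `|z| = (p ^ R)%:R * `|t| by rewrite ez normrM normr_nat.
have e2 : `|z| = R%:R by rewrite ezi -intr_norm natr_absz.
have : (p ^ R)%:R <= `|z| :> rat.
  by rewrite e1 -{1}[(p ^ R)%:R]mulr1 ler_wpM2l.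
by rewrite e2 leNgt ltr_nat hRp.
Qed.
End Deg.

Lemma gen_all g : ker g -> exists c : 'I_l -> SQ, map_mx (@toQ l) g = \sum_k c k *: GQ k.
Proof.
move=> hg.
pose K := (\max_(j < l) msize (g j 0%R)).+1.
have hdec : g = \sum_(d < K) map_mx (ph d) g.
  apply/matrixP => a b; rewrite summxE (ord1 b).
  under eq_bigr => d' _ do rewrite mxE.
  apply: pihomog_partitionE; apply: leqW; exact: (leq_bigmax a).
have : forall d : 'I_K, exists c : 'I_l -> SQ,
    map_mx (@toQ l) (map_mx (ph d) g) = \sum_k c k *: GQ k.
  move=> d; apply: gen_homog; first exact: (ker_ph Hlin).
  by move=> j; rewrite mxE; apply: pihomogP.
case/fin_all_exists => c hc.
exists (fun k => \sum_(d < K) c d k).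
rewrite {1}hdec.
have -> : map_mx (@toQ l) (\sum_(d < K) map_mx (ph d) g) =
          \sum_(d < K) map_mx (@toQ l) (map_mx (ph d) g).
  apply/matrixP => a b; rewrite !mxE !summxE /toQ raddf_sum; apply: eq_bigr => d _.
  by rewrite !mxE.
under eq_bigr => d _ do rewrite hc.
rewrite exchange_big /=; apply: eq_bigr => k _; by rewrite scaler_suml.
Qed.
End Gen.

Lemma mpolyC_intK (l : nat) (D : int) : D != 0 ->
  ((D%:~R : rat)^-1)%:MP * (D%:~R : {mpoly rat[l]}) = 1.
Proof.
move=> D0; rewrite mpolyC_int -rmorphM mulVf ?rmorph1 //.
by rewrite intr_eq0.
Qed.

Lemma toQ_mx_eq0 (l : nat) (M : 'cV[{mpoly int[l]}]_l) : map_mx (@toQ l) M = 0 -> M = 0.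
Proof.
move=> h; apply/matrixP => a b; have := congr1 (fun M : 'cV[{mpoly rat[l]}]_l => M a b) h.
rewrite /= !mxE => h1; apply: toQ_inj; rewrite h1.
exact: (esym (raddf0 (@toQ l))).
Qed.

Unset Implicit Arguments.
Theorem theorem4p2 (l n : nat) (alpha : 'I_n -> {mpoly int[l]})
  (m : 'I_n -> nat) (p : nat) (e : 'I_l -> nat) :
  (forall i, alpha i \is 1.-homog) ->
  (forall i, ~ exists q : nat, prime_divides q (alpha i)) ->
  (forall i j : 'I_n, i != j -> forall c : rat, toQ (alpha i) != c *: toQ (alpha j)) ->
  prime p ->
  (forall i j : 'I_n, i != j -> pi_p p (alpha i) != pi_p p (alpha j)) ->
  (forall delta : 'cV[{mpoly 'F_p[l]}]_l,
     in_D (fun i => pi_p p (alpha i)) m delta ->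
     exists g : 'cV[{mpoly int[l]}]_l,
       in_ker_phiZ alpha m g /\ map_mx (@pi_p p l) g = delta) ->
  free_with_exponents (fun i => pi_p p (alpha i)) m e ->
  free_with_exponents (fun i => toQ (alpha i)) m e.
Proof.
move=> Hlin Hprim _ pp _ Hsurj [theta [Hin Hhom Hgen Hind]].
have Hnd : forall i, pi_p p (alpha i) != 0.
  by move=> i; apply: (pi_ne0 pp) => h; apply: (Hprim i); exists p.
have [G HG] := lifts Hlin Hhom (fun k => Hsurj _ (Hin k)).
have HGker : forall k, in_ker_phiZ alpha m (G k) by move=> k; case: (HG k).
have HGpi : forall k, map_mx (@pi_p p l) (G k) = theta k by move=> k; case: (HG k).
have HGhom : forall k j, G k j 0 \is (e k).-homog by move=> k; case: (HG k).
exists (GQ G); split.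
- move=> k; exact: (ker_in_D _ (HGker k)).
- move=> k j; exact: GQhom.
- move=> delta hd.
  case/fin_all_exists: hd => h hh.
  pose F (x : 'I_l + 'I_n) := match x with inl j => delta j 0 | inr i => h i end.
  have [D D0 hD] := denom_mfam F.
  case/fin_all_exists: hD => Q hQ.
  pose g : 'cV[{mpoly int[l]}]_l := \col_j Q (inl j).
  have eg : map_mx (@toQ l) g = (D%:~R : {mpoly rat[l]}) *: delta.
    by apply/matrixP => a b; rewrite !mxE (ord1 b) hQ.
  have hg : in_ker_phiZ alpha m g.
    move=> i; exists (Q (inr i)); apply: toQ_inj.
    rewrite coef_mulE toQ_deriv_app eg deriv_appZ hh toQ_mul toQ_exp hQ /=.
    by rewrite mulrCA.
  have [c hc] := gen_all Hlin Hnd pp Hgen HGker HGpi HGhom hg.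
  exists (fun k => ((D%:~R : rat)^-1)%:MP * c k).
  have D0' : D != 0 by rewrite gt_eqF.
  rewrite -[delta]scale1r -(@mpolyC_intK l D D0') -scalerA -eg hc scaler_sumr.
  by apply: eq_bigr => k _; rewrite scalerA.
- move=> c hc.
  have [D D0 hD] := denom_mfam c.
  case/fin_all_exists: hD => C hC.
  have hC0 : \sum_k C k *: G k = 0.
    apply: toQ_mx_eq0; rewrite toQ_mx_comb.
    under eq_bigr => k _ do rewrite hC -scalerA.
    by rewrite -scaler_sumr hc scaler0.
  move=> k; have := indepZ pp Hind HGpi hC0 k.
  move=> /(congr1 (@toQ l)); rewrite hC => h0'.
  have h0 : (D%:~R : {mpoly rat[l]}) * c k = 0 by rewrite h0'; exact: (raddf0 (@toQ l)).
  have D0' : D != 0 by rewrite gt_eqF.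
  by rewrite -[c k]mul1r -(@mpolyC_intK l D D0') -mulrA h0 mulr0.
Qed.
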